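(* For every $\mathcal W\in{\rm Gr}^{(0)}_+$ one has $\mathcal A_{\mathcal W}\cap\mathcal D_-=\{0\}$: the only Kac–Schwarz operator of $\mathcal W$ lying in $\mathcal D_-$ is $0$.
   Context: $H_+=\mathbb C[z]$, $H_-=z^{-1}\mathbb C[[z^{-1}]]$, $H=H_+\oplus H_-$. ${\rm Gr}^{(0)}_+$ is the set of closed subspaces $\mathcal W\subset H$ with $\pi_+:\mathcal W\to H_+$ (projection along $H_-$) an isomorphism. $\mathcal D=\mathbb C((z^{-1}))[[\partial_z]]$ is the ring of differential operators $\sum_{m\ge0}a_m(z)\partial_z^m$, $a_m\in H$, acting on $H$; $\mathcal D_\pm=H_\pm[[\partial_z]]$. The Kac–Schwarz algebra of $\mathcal W$ is $\mathcal A_{\mathcal W}=\{\mathtt A\in\mathcal D:\mathtt A\cdot\mathcal W\subset\mathcal W\}$. *)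

(* Defs.v *)
From HB Require Import structures.
From mathcomp Require Import all_boot all_order all_algebra.
From mathcomp Require Import boolp classical_sets fsbigop reals.
From mathcomp Require Import complex.
Set Implicit Arguments. Unset Strict Implicit. Unset Printing Implicit Defensive.
Import Order.TTheory GRing.Theory Num.Theory.
Local Open Scope ring_scope.
Local Open Scope classical_set_scope.

Section Sato.
Variable C : fieldType.

(* An element of H = C[z] (+) z^-1 C[[z^-1]] is a coefficient function
   f : int -> C (f n = coefficient of z^n) with support bounded above. *)
Definition inH (f : int -> C) : Prop := exists N : int, forall n, N < n -> f n = 0.

Definition inHplus (f : int -> C) : Prop := inH f /\ forall n : int, n < 0 -> f n = 0.

Definition inHminus (f : int -> C) : Prop := forall n : int, 0 <= n -> f n = 0.

Definition piplus (f : int -> C) : int -> C := fun n => if 0 <= n then f n else 0.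

Definition subspaceH (W : set (int -> C)) : Prop :=
  [/\ forall f, W f -> inH f,
      W (fun _ => 0),
      forall f g, W f -> W g -> W (fun n => f n + g n)
    & forall (c : C) f, W f -> W (fun n => c * f n)].

(* W is closed in the z^{-1}-adic topology of H = C((z^{-1})): the basic
   neighbourhoods of f are { g | g n = f n for all n >= N }, N : int. *)
Definition closedH (W : set (int -> C)) : Prop :=
  forall f, inH f ->
    (forall N : int, exists w, W w /\ forall n, N <= n -> w n = f n) -> W f.

Definition Gr0plus (W : set (int -> C)) : Prop :=
  [/\ subspaceH W, closedH W,
      (forall w1 w2, W w1 -> W w2 -> piplus w1 = piplus w2 -> w1 = w2)
    & (forall g, inHplus g -> exists w, W w /\ piplus w = g)].

Definition dz (f : int -> C) : int -> C := fun n => (n + 1)%:~R * f (n + 1).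

(* An operator A = sum_{m>=0} a_m(z) d_z^m is given by its coefficient
   sequence a : nat -> (int -> C), with a m = a_m. *)
Definition inDminus (a : nat -> int -> C) : Prop := forall m, inHminus (a m).

(* Action of A = sum_m a_m d^m on f:
   (A f)_n = sum_{m >= 0} sum_{j} (a_m)_j (d^m f)_{n-j}.
   For A in D_- (so (a_m)_j = 0 for j >= 0) this is written with j = -(k+1),
   k : nat; for f in H the family of terms is finitely supported, so the
   sum is a genuine finite sum (fsbig over finitely supported families). *)
Definition actD (a : nat -> int -> C) (f : int -> C) : int -> C :=
  fun n => \sum_(p \in [set: nat * nat])
             a p.1 (- (p.2.+1)%:Z) * iter p.1 dz f (n + (p.2.+1)%:Z).

Definition inKS (W : set (int -> C)) (a : nat -> int -> C) : Prop :=
  forall w, W w -> W (actD a w).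

End Sato.

(* Main.v *)
Set Warnings "-all".
Require Import Defs.
From HB Require Import structures.
From mathcomp Require Import all_boot all_order all_algebra.
From mathcomp Require Import boolp classical_sets fsbigop reals.
From mathcomp Require Import complex.
From mathcomp Require Import zify.
Import Order.TTheory GRing.Theory Num.Theory.
Local Open Scope ring_scope.
Local Open Scope classical_set_scope.

Lemma iter_dz (C : fieldType) m (f : int -> C) j :
  iter m (@dz C) f j = (\prod_(i < m) (j + (i.+1)%:Z)%:~R) * f (j + m%:Z).
Proof.
elim: m f j => [|m IH] f j; first by rewrite big_ord0 mul1r addr0.
rewrite iterSr IH /dz big_ord_recr /= -mulrA; congr (_ * (_ * f _)).
- congr (_%:~R); lia.
- lia.
Qed.

Lemma iter_dz0 (C : fieldType) m (f : int -> C) (D j : int) :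
  (forall j', D < j' -> f j' = 0) -> D < j + m%:Z -> iter m (@dz C) f j = 0.
Proof. by move=> hf hj; rewrite iter_dz hf ?mulr0. Qed.

Lemma iter_dz_prod0 (C : fieldType) (m d : nat) (f : int -> C) :
  (d < m)%N -> iter m (@dz C) f (d%:Z - m%:Z) = 0.
Proof.
move=> hdm; rewrite iter_dz.
have hi : (m - d - 1 < m)%N by lia.
rewrite (bigD1 (Ordinal hi)) //= .
have -> : (d%:Z - m%:Z + (m - d - 1).+1%:Z) = 0 by lia.
by rewrite mul0r mul0r.
Qed.

Theorem mainTheorem3 (R : realType) (W : set (int -> R[i])) (a : nat -> int -> R[i]) :
  Gr0plus W -> inDminus a -> inKS W a -> a = (fun _ _ => 0).
Proof.
move=> [[Wsub W0 _ _] _ Winj Wsurj] HD HKS.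
have key : forall t m k, (m + k).+1 = t -> a m (- (k.+1)%:Z) = 0.
  elim/ltn_ind => t IHt.
  suff inner : forall d, (d < t)%N -> forall k, (d + k).+1 = t -> a d (- (k.+1)%:Z) = 0.
    by move=> m k hmk; apply: inner => //; lia.
  elim/ltn_ind => d IHd hdt k hdk.
  have gP : inHplus (fun n : int => if n == d%:Z then (1 : R[i]) else 0).
    split; first by exists d%:Z => n hn; case: eqP => // e; lia.
    by move=> n hn; case: eqP => // e; lia.
  have [w [Ww hw]] := Wsurj _ gP.
  have hw1 : w d%:Z = 1.
    by have := congr1 (fun f => f d%:Z) hw; rewrite /piplus /= eqxx.
  have hw0 : forall j, d%:Z < j -> w j = 0.
    move=> j hj; have := congr1 (fun f => f j) hw; rewrite /piplus /=.
    rewrite ifT; last by lia.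
    by case: eqP => // e; lia.
  have hAw : actD a w = (fun _ => 0).
    apply: Winj => //; first exact: HKS.
    apply/funext => n; rewrite /piplus; case: ifP => // n0.
    rewrite /actD; apply: fsbig1 => -[m k'] _ /=.
    case: (ltnP (m + k').+1 t) => h; first by rewrite (IHt _ h m k' erefl) mul0r.
    by rewrite (@iter_dz0 _ m w d%:Z) ?mulr0 //; lia.
  have := congr1 (fun f => f (d%:Z - t%:Z)) hAw; rewrite /actD /=.
  rewrite -(fsbig_widen [set (d, k)]) //; last first.
    move=> -[m k'] [_ /= hne]; rewrite /preimage /=.
    case: (ltngtP (m + k').+1 t) => h.
    - by rewrite (IHt _ h m k' erefl) mul0r.
    - by rewrite (@iter_dz0 _ m w d%:Z) ?mulr0 //; lia.
    - case: (ltngtP m d) => hm.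
      + by rewrite (IHd m hm _ k') ?mul0r //; lia.
      + rewrite (_ : d%:Z - t%:Z + (k'.+1)%:Z = d%:Z - m%:Z); last by lia.
        by rewrite iter_dz_prod0 // mulr0.
      + exfalso; apply: hne; rewrite hm; congr pair; lia.
  rewrite fsbig_set1 /=.
  rewrite (_ : d%:Z - t%:Z + (k.+1)%:Z = 0); last by lia.
  rewrite iter_dz add0r hw1 mulr1 => /eqP; rewrite mulf_eq0 => /orP [/eqP //|].
  rewrite prodf_seq_eq0 => /hasP [i _ /=]; rewrite add0r intr_eq0; lia.
apply/funext => m; apply/funext; case => [n|k].
  by apply: HD.
by rewrite NegzE (key (m + k).+1 m k).
Qed.
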